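(* Let $n\ge3$ and $A\subseteq[n-1]$ nonempty, let $w=\max A$ and $A'=A\setminus\{w\}$. If $w=n-1$, then $f_n(A)=2f_{n-1}(A')$.
   Context: For $m\ge1$ and a set $B$ of positive integers, $f_m(B)$ denotes the number of linear orders $q$ on $[m]$ such that for every triple $i<j<k$ in $[m]$: if $j\in B$ then $i$ is not ranked last among $\{i,j,k\}$ in $q$, and if $j\notin B$ then $k$ is not ranked first among $\{i,j,k\}$ in $q$ (i.e. $f_m(B)$ is the size of the set-alternating domain on $[m]$ generated by $B\cap[m]$). *)

(* Defs.v *)
From mathcomp Require Import all_boot all_fingroup.
Set Implicit Arguments. Unset Strict Implicit. Unset Printing Implicit Defensive.

(* A linear order q on [m] = {1,...,m} is encoded by a permutation
   pos : 'S_m giving the rank (position) of each element; element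
   i : 'I_m stands for the integer i+1 of [m].  x is ranked before y in q
   iff pos x < pos y. *)

Definition sa_triple (B : pred nat) (m : nat) (pos : 'S_m) (i j k : 'I_m) : bool :=
  if j.+1 \in B then
    ~~ ((pos j < pos i) && (pos k < pos i))
  else
    ~~ ((pos k < pos i) && (pos k < pos j)).

Definition set_alternating (B : pred nat) (m : nat) (pos : 'S_m) : bool :=
  [forall i : 'I_m, forall j : 'I_m, forall k : 'I_m,
     ((i < j) && (j < k)) ==> sa_triple B pos i j k].

Definition f (m : nat) (B : pred nat) : nat :=
  #|[set pos : 'S_m | set_alternating B pos]|.

(* Main.v *)
Require Import Defs.
From mathcomp Require Import all_boot all_fingroup.
From mathcomp Require Import zify.
Set Implicit Arguments. Unset Strict Implicit.



Lemma ord_cases m (k : 'I_m.+2) :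
  k = ord_max \/ k = inord m \/ (k < m)%N.
Proof.
have := ltn_ord k => hk.
have [h|h] := ltnP k m; first by right; right.
have [e|e] := eqVneq (k : nat) m.
  by right; left; apply: ord_inj; rewrite inordK ?e.
by left; apply: ord_inj => /=; lia.
Qed.

Lemma val_Y m : (inord m : 'I_m.+2) = m :> nat.
Proof. by rewrite inordK. Qed.

Lemma saP (B : pred nat) m (pos : 'S_m) :
  reflect (forall i j k : 'I_m, i < j -> j < k -> sa_triple B pos i j k)
          (set_alternating B pos).
Proof.
apply: (iffP idP).
  move=> h i j k ij jk.
  by move: h => /forallP/(_ i)/forallP/(_ j)/forallP/(_ k); rewrite ij jk.
move=> h; apply/forallP => i; apply/forallP => j; apply/forallP => k.
by apply/implyP => /andP[ij jk]; apply: h.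
Qed.

Lemma L1 (A : pred nat) m (pos : 'S_m.+2) : m.+1 \in A ->
  set_alternating A pos -> pos ord_max = ord_max \/ pos (inord m) = ord_max.
Proof.
move=> hY hD.
have [k pk] : exists k : 'I_m.+2, pos k = ord_max.
  by exists ((pos^-1)%g ord_max); rewrite permKV.
have := ord_cases k; case => [kX|[kY|kl]].
  by left; move: pk; rewrite kX.
  by right; move: pk; rewrite kY.
exfalso.
have := (saP _ _ hD) k (inord m) ord_max.
rewrite val_Y /= kl ltnSn => /(_ isT isT).
rewrite /sa_triple val_Y hY pk.
have ltm (z : 'I_m.+2) : z != k -> pos z < @ord_max m.+1.
  move=> zk; rewrite ltn_neqAle -ltnS ltn_ord andbT.
  by rewrite -pk (inj_eq val_inj) (inj_eq perm_inj).
rewrite !ltm //.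
  apply/eqP => e; move: kl; rewrite -e /=; lia.
apply/eqP => e; move: kl; rewrite -e val_Y; lia.
Qed.

Lemma L2 (A : pred nat) m (pos : 'S_m.+2) : m.+1 \in A ->
  set_alternating A pos ->
  set_alternating A ((tperm (ord_max : 'I_m.+2) (inord m)) * pos)%g.
Proof.
move=> hY /saP hD; apply/saP => i j k ij jk.
rewrite /sa_triple !permM.
have XY : (ord_max : 'I_m.+2) != inord m.
  by rewrite -(inj_eq val_inj) /= val_Y; lia.
have tid (z : 'I_m.+2) : z < m -> tperm ord_max (inord m) z = z.
  move=> zm; apply: tpermD; rewrite -(inj_eq val_inj) /= ?val_Y; lia.
have := ord_cases k; case => [kX|[kY|kl]].
- subst k; rewrite tpermL.
  have := ord_cases j; case => [jX|[jY|jl]].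
  + subst j; move: jk; rewrite /=; lia.
  + subst j; rewrite tpermR tid; last by move: ij; rewrite val_Y.
    have := hD i (inord m) ord_max ij; rewrite /= val_Y ltnSn => /(_ isT).
    by rewrite /sa_triple val_Y hY andbC.
  + rewrite !tid //; last by lia.
    apply: hD => //; rewrite val_Y //.
- subst k; rewrite tpermR !tid; try (move: jk ij; rewrite val_Y; lia).
  apply: hD => //=; move: jk; rewrite val_Y; lia.
- rewrite !tid //; try lia.
  by apply: hD.
Qed.

Definition SX (A : pred nat) m :=
  [set p : 'S_m.+2 | set_alternating A p & p ord_max == ord_max].
Definition SY (A : pred nat) m :=
  [set p : 'S_m.+2 | set_alternating A p & p (inord m) == ord_max].

Lemma L3 (A : pred nat) m : m.+1 \in A -> #|SY A m| = #|SX A m|.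
Proof.
move=> hY.
set t := tperm (ord_max : 'I_m.+2) (inord m).
have le (S T : {set 'S_m.+2}) : {in S, forall p, (t * p)%g \in T} -> #|S| <= #|T|.
  move=> h; rewrite -(card_imset S (mulgI t)); apply: subset_leq_card.
  by apply/subsetP => q /imsetP[p pS ->]; apply: h.
apply/eqP; rewrite eqn_leq; apply/andP; split; apply: le => p;
  rewrite !inE => /andP[hD hp]; rewrite L2 //= permM.
  by rewrite tpermL.
by rewrite tpermR.
Qed.

Lemma Ltri (A : pred nat) m (s : 'S_m.+1) (i j k : 'I_m.+1) : j < m ->
  sa_triple A (lift_perm ord_max ord_max s) (lift ord_max i) (lift ord_max j) (lift ord_max k)
  = sa_triple [pred x | (x \in A) && (x != m.+1)] s i j k.
Proof.
move=> jm; rewrite /sa_triple !lift_perm_lift !lift_max inE.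
have -> : (j.+1 != m.+1) by lia.
by rewrite andbT.
Qed.

Lemma L4a (A : pred nat) m (s : 'S_m.+1) :
  set_alternating A (lift_perm ord_max ord_max s) =
  set_alternating [pred x | (x \in A) && (x != m.+1)] s.
Proof.
apply/saP/saP => h i j k ij jk.
  rewrite -Ltri; last by have := ltn_ord k; lia.
  by apply: h; rewrite !lift_max.
case: (unliftP ord_max k) => [k'|] ek; last first.
  subst k; rewrite /sa_triple lift_perm_id.
  by case: ifP => _; rewrite !ltnNge !leq_ord ?andbF.
case: (unliftP ord_max j) => [j'|] ej; last by subst j k; move: jk => /=; rewrite /bump; have := ltn_ord k'; case: leqP => /=; lia.
case: (unliftP ord_max i) => [i'|] ei; last by subst i j; move: ij => /=; rewrite /bump; have := ltn_ord j'; case: leqP => /=; lia.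
subst i j k; move: ij jk; rewrite !lift_max => ij jk.
rewrite Ltri; last by move: (ltn_ord k') => /= ?; lia.
exact: h.
Qed.

Lemma Lsurj m (q : 'S_m.+2) : q ord_max = ord_max ->
  exists s : 'S_m.+1, q = lift_perm ord_max ord_max s.
Proof.
move=> qX.
have lt (k : 'I_m.+1) : q (lift ord_max k) < m.+1.
  have : q (lift ord_max k) != ord_max.
    have nl : lift ord_max k != ord_max by rewrite eq_sym neq_lift.
    apply: contra nl => /eqP e; apply/eqP; apply: (@perm_inj _ q).
    by rewrite e qX.
  rewrite -(inj_eq val_inj) /=; have := ltn_ord (q (lift ord_max k)); lia.
pose g (k : 'I_m.+1) : 'I_m.+1 := inord (q (lift ord_max k)).
have ginj : injective g.
  move=> a b /(congr1 (@nat_of_ord _)); rewrite /g !inordK ?lt // => /val_inj/perm_inj.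
  exact: lift_inj.
exists (perm ginj); apply/permP => k.
case: (unliftP ord_max k) => [k'|] ->.
  by apply: val_inj; rewrite lift_perm_lift permE /= /bump /g inordK ?lt // ltnNge -ltnS lt.
by rewrite lift_perm_id.
Qed.

Lemma L4 (A : pred nat) m :
  #|SX A m| = f m.+1 [pred x | (x \in A) && (x != m.+1)].
Proof.
have inj : injective (@lift_perm m.+1 ord_max ord_max).
  move=> s t e; apply/permP => k; apply: (@lift_inj _ ord_max).
  by have := congr1 (fun p : 'S_m.+2 => p (lift ord_max k)) e; rewrite /= !lift_perm_lift.
rewrite /f -(card_imset _ inj); apply: eq_card => q.
rewrite !inE; apply/andP/imsetP.
  move=> [hD /eqP qX].
  have [s qs] := Lsurj qX; by exists s => //; rewrite inE -L4a -qs.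
move=> [s]; rewrite inE -L4a => hs ->; split => //.
by rewrite lift_perm_id.
Qed.

Theorem proposition4 (n : nat) (A : pred nat) (w : nat) :
  3 <= n ->
  (forall x, x \in A -> 1 <= x <= n.-1) ->   (* A ⊆ [n-1] *)
  w \in A ->                                  (* A nonempty, w ∈ A *)
  (forall x, x \in A -> x <= w) ->            (* w = max A *)
  w = n.-1 ->
  f n A = 2 * f n.-1 [pred x | (x \in A) && (x != w)].
Proof.
move=> hn _ hw _ ew; subst w.
case: n hn hw => [|[|m]] // _ /= hY.
rewrite -L4 mul2n -addnn -{2}L3 //.
rewrite /f -(cardsID [set p : 'S_m.+2 | p ord_max == ord_max]).
congr (_ + _); apply: eq_card => p; rewrite !inE.
  by rewrite andbC.
apply/andP/andP => [[/negP nX hD]|[hD /eqP pY]]; split => //.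
  by have := L1 hY hD; case => // /eqP.
apply/negP => /eqP pX.
have : (ord_max : 'I_m.+2) = inord m by apply: (@perm_inj _ p); rewrite pX pY.
by move/(congr1 val); rewrite /= val_Y; lia.
Qed.
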